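(* Let $(X,d_X)$ be an ultrametric space and $(Y,d_Y)$, $(Z,d_Z)$ be metric spaces. Let $f:X\to Y$ be a full function, let $L>0$, let $g:Y\to Z$ be Lipschitz with constant $L$ and $h:Z\to X$ be Lipschitz with constant $L$. Then $g\circ f$ is full, and if $d_Z$ is an ultrametric then $f\circ h$ is also full. The same holds with ''full'' replaced everywhere by ''$\omega$-full''.
   Context: For an ultrametric space $(W,d_W)$, a set $A\subseteq W$ is full with constant $r>0$ if $B(x,r)=\{y\in W:d_W(x,y)<r\}\subseteq A$ for every $x\in A$, and full if it is full with some constant. A function $f$ from an ultrametric space $W$ to a space $V$ is full if it takes finitely many values and the preimage of each value is a full set; it is $\omega$-full if it takes at most countably many values and there is a single $r>0$ such that the preimage of each value is full with constant $r$. A function $g:(Y,d_Y)\to(Z,d_Z)$ is Lipschitz with constant $L$ if $d_Z(g(y),g(y'))\le L\,d_Y(y,y')$ for all $y,y'$. *)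

(* Defs.v *)
From Stdlib Require Import Reals List.
Open Scope R_scope.

Definition is_metric {T : Type} (d : T -> T -> R) : Prop :=
  (forall x y, 0 <= d x y) /\
  (forall x y, d x y = 0 <-> x = y) /\
  (forall x y, d x y = d y x) /\
  (forall x y z, d x z <= d x y + d y z).

Definition is_ultrametric {T : Type} (d : T -> T -> R) : Prop :=
  is_metric d /\ (forall x y z, d x z <= Rmax (d x y) (d y z)).

Definition ball {T : Type} (d : T -> T -> R) (x : T) (r : R) : T -> Prop :=
  fun y => d x y < r.

Definition full_set_with {T : Type} (d : T -> T -> R) (A : T -> Prop) (r : R) : Prop :=
  0 < r /\ forall x, A x -> forall y, ball d x r y -> A y.

Definition full_set {T : Type} (d : T -> T -> R) (A : T -> Prop) : Prop :=
  exists r, full_set_with d A r.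

Definition preimage {T U : Type} (f : T -> U) (v : U) : T -> Prop :=
  fun x => f x = v.

Definition finitely_valued {T U : Type} (f : T -> U) : Prop :=
  exists l : list U, forall x, In (f x) l.

Definition countably_valued {T U : Type} (f : T -> U) : Prop :=
  exists c : U -> nat, forall x x', c (f x) = c (f x') -> f x = f x'.

Definition full_fun {T U : Type} (d : T -> T -> R) (f : T -> U) : Prop :=
  finitely_valued f /\ forall v : U, full_set d (preimage f v).

Definition omega_full_fun {T U : Type} (d : T -> T -> R) (f : T -> U) : Prop :=
  countably_valued f /\
  exists r, 0 < r /\ forall v : U, full_set_with d (preimage f v) r.

Definition lipschitz_with {T U : Type} (dT : T -> T -> R) (dU : U -> U -> R)
  (g : T -> U) (L : R) : Prop :=
  forall y y', dU (g y) (g y') <= L * dT y y'.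

(* Main.v *)
Require Import Defs.
From Stdlib Require Import Reals Lra List ClassicalEpsilon.
Open Scope R_scope.

Lemma fsw_mono {T} (d : T -> T -> R) A r r' :
  full_set_with d A r -> 0 < r' -> r' <= r -> full_set_with d A r'.
Proof.
  intros [Hr H] Hr' Hle; split; auto.
  intros x Ax y Hy; apply (H x Ax); unfold ball in *; lra.
Qed.

Lemma list_min {T U} (d : T -> T -> R) (f : T -> U) (l : list U) :
  (forall v, full_set d (preimage f v)) ->
  exists m, 0 < m /\ forall v, In v l -> full_set_with d (preimage f v) m.
Proof.
  intros Hf; induction l as [|a l IH].
  - exists 1; split; [lra| intros v []].
  - destruct IH as [m [Hm IH]]. destruct (Hf a) as [ra Ha].
    assert (0 < ra) by (destruct Ha; auto).
    exists (Rmin m ra); split.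
    + apply Rmin_pos; auto.
    + intros v [<-|Hv].
      * apply (fsw_mono _ _ ra); [auto|apply Rmin_pos; auto|apply Rmin_r].
      * apply (fsw_mono _ _ m); [auto|apply Rmin_pos; auto|apply Rmin_l].
Qed.

Theorem mainTheorem9 (X Y Z : Type)
  (dX : X -> X -> R) (dY : Y -> Y -> R) (dZ : Z -> Z -> R)
  (hX : is_ultrametric dX) (hY : is_metric dY) (hZ : is_metric dZ)
  (f : X -> Y) (L : R) (g : Y -> Z) (h : Z -> X)
  (hL : 0 < L) (hg : lipschitz_with dY dZ g L) (hh : lipschitz_with dZ dX h L) :
  (full_fun dX f ->
     full_fun dX (fun x => g (f x)) /\
     (is_ultrametric dZ -> full_fun dZ (fun z => f (h z)))) /\
  (omega_full_fun dX f ->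
     omega_full_fun dX (fun x => g (f x)) /\
     (is_ultrametric dZ -> omega_full_fun dZ (fun z => f (h z)))).
Proof.
  split.
  - intros [[l Hl] Hf]. destruct (list_min dX f l Hf) as [m [Hm Hmin]].
    split; [|intros _]; split.
    + exists (map g l); intro x; apply in_map; auto.
    + intro v; exists m; split; auto.
      intros x Hx y Hy. unfold preimage in *.
      destruct (Hmin (f x) (Hl x)) as [_ H].
      rewrite <- Hx; f_equal; exact (H x eq_refl y Hy).
    + exists l; intro z; auto.
    + intro v; exists (m / L); split; [apply Rdiv_lt_0_compat; auto|].
      intros z Hz z' Hz'. unfold preimage in *.
      destruct (Hmin (f (h z)) (Hl _)) as [_ H].
      rewrite <- Hz; apply (H (h z) eq_refl).
      unfold ball in *. specialize (hh z z').
      apply (Rmult_lt_compat_l L) in Hz'; auto.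
      replace (L * (m / L)) with m in Hz' by (field; lra). lra.
  - intros [[c Hc] [r [Hr Hf]]]. split; [|intros _]; split.
    + exists (fun z => epsilon (inhabits 0%nat)
                 (fun n => exists x, g (f x) = z /\ c (f x) = n)).
      intros x x' E.
      pose proof (epsilon_spec (inhabits 0%nat)
                 (fun n => exists x0, g (f x0) = g (f x) /\ c (f x0) = n)
                 (ex_intro _ _ (ex_intro _ x (conj eq_refl eq_refl)))) as [x1 [E1 C1]].
      pose proof (epsilon_spec (inhabits 0%nat)
                 (fun n => exists x0, g (f x0) = g (f x') /\ c (f x0) = n)
                 (ex_intro _ _ (ex_intro _ x' (conj eq_refl eq_refl)))) as [x2 [E2 C2]].
      rewrite <- E1, <- E2. f_equal. apply Hc. rewrite C1, C2. exact E.
    + exists r; split; auto. intro v; split; auto.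
      intros x Hx y Hy. unfold preimage in *.
      destruct (Hf (f x)) as [_ H].
      rewrite <- Hx; f_equal; exact (H x eq_refl y Hy).
    + exists c; intros z z' E; apply Hc; exact E.
    + exists (r / L); split; [apply Rdiv_lt_0_compat; auto|].
      intro v; split; [apply Rdiv_lt_0_compat; auto|].
      intros z Hz z' Hz'. unfold preimage in *.
      destruct (Hf (f (h z))) as [_ H].
      rewrite <- Hz; apply (H (h z) eq_refl).
      unfold ball in *. specialize (hh z z').
      apply (Rmult_lt_compat_l L) in Hz'; auto.
      replace (L * (r / L)) with r in Hz' by (field; lra). lra.
Qed.
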